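(* For every even positive integer $n$, $d(L(n,2n-1)) = n^2 - n$. More precisely, there is a partial coloring of an $n\times n$ square with exactly $n^2-n$ colored entries (all off-diagonal entries colored, all diagonal entries uncolored) that uniquely extends to $L(n,2n-1)$, and no partial coloring with more than $n$ uncolored entries uniquely extends to $L(n,2n-1)$.
   Context: For positive integers $n,k$, let $\mathcal{L}_{n,k}$ be the set of $n\times n$ squares all of whose entries are colored with colors from a fixed set of $k$ colors $\{1,\dots,k\}$ such that any two entries in the same row, or in the same column, have different colors. A partial coloring of an $n\times n$ square assigns colors from $\{1,\dots,k\}$ to some of its entries; the remaining entries are called uncolored. A partial coloring extends to $L(n,k)$ if the uncolored entries can be colored so that the resulting fully colored square lies in $\mathcal{L}_{n,k}$ (keeping the given colors), and it uniquely extends to $L(n,k)$ if there is exactly one such way. A defining set of the $k$-coloring of an $n\times n$ square is the set of colored entries of a partial coloring that uniquely extends to $L(n,k)$; the defining number $d(L(n,k))$ is the minimum cardinality of such a defining set. *)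

(* Defs.v *)
From mathcomp Require Import all_boot.
Set Implicit Arguments.
Unset Strict Implicit.
Unset Printing Implicit Defensive.

(* Colors {1,...,k} are represented by 'I_k = {0,...,k-1}; cells are pairs
   (row, column) in 'I_n * 'I_n. *)

Definition coloring (n k : nat) := {ffun 'I_n * 'I_n -> 'I_k}.

(* A partial k-coloring: None = uncolored entry. *)
Definition pcoloring (n k : nat) := {ffun 'I_n * 'I_n -> option 'I_k}.

Definition in_L (n k : nat) (f : coloring n k) : bool :=
  [forall i : 'I_n, forall j1 : 'I_n, forall j2 : 'I_n,
     (j1 != j2) ==> (f (i, j1) != f (i, j2))] &&
  [forall j : 'I_n, forall i1 : 'I_n, forall i2 : 'I_n,
     (i1 != i2) ==> (f (i1, j) != f (i2, j))].

Definition extends_to (n k : nat) (P : pcoloring n k) (f : coloring n k) : bool :=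
  [forall c : 'I_n * 'I_n, if P c is Some a then f c == a else true].

Definition colored (n k : nat) (P : pcoloring n k) : {set 'I_n * 'I_n} :=
  [set c | P c != None].

Definition uncolored (n k : nat) (P : pcoloring n k) : {set 'I_n * 'I_n} :=
  [set c | P c == None].

Definition uniquely_extends (n k : nat) (P : pcoloring n k) : bool :=
  #|[set f : coloring n k | in_L f && extends_to P f]| == 1.

Definition defining_set (n k : nat) (S : {set 'I_n * 'I_n}) : Prop :=
  exists P : pcoloring n k, uniquely_extends P /\ colored P = S.

Definition is_defining_number (n k m : nat) : Prop :=
  (exists S : {set 'I_n * 'I_n}, defining_set k S /\ #|S| = m) /\
  (forall S : {set 'I_n * 'I_n}, defining_set k S -> m <= #|S|).

(* Main.v *)
Require Import Defs.
From mathcomp Require Import all_boot.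
From mathcomp Require Import zify.
Set Implicit Arguments. Unset Strict Implicit.

Definition conflict (n : nat) (c d : 'I_n * 'I_n) :=
  (c != d) && ((c.1 == d.1) || (c.2 == d.2)).

Lemma conflictC n (c d : 'I_n * 'I_n) : conflict c d = conflict d c.
Proof. by rewrite /conflict eq_sym (eq_sym c.1) (eq_sym c.2). Qed.

Lemma in_LP n k (f : coloring n k) :
  reflect (forall c d, conflict c d -> f c != f d) (in_L f).
Proof.
apply: (iffP andP).
- case=> /forallP Hr /forallP Hc [c1 c2] [d1 d2].
  rewrite /conflict /= => /andP[neq /orP[/eqP e1|/eqP e2]].
  + subst d1. move: (Hr c1) => /forallP/(_ c2)/forallP/(_ d2)/implyP; apply.
    by apply: contraNneq neq => ->.
  + subst d2. move: (Hc c2) => /forallP/(_ c1)/forallP/(_ d1)/implyP; apply.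
    by apply: contraNneq neq => ->.
- move=> H; split; apply/forallP=> i; apply/forallP=> j1; apply/forallP=> j2;
    apply/implyP=> ne; apply: H; rewrite /conflict /= eqxx ?orbT andbT
    xpair_eqE eqxx /= ?andbT ne //; rewrite eq_sym.
Qed.

Lemma exists_notin (T : finType) (A : {set T}) : #|A| < #|T| -> exists z, z \notin A.
Proof.
move=> H. have : 0 < #|~: A| by move: (cardsC A); lia.
by rewrite card_gt0 => /set0Pn [z]; rewrite inE => ?; exists z.
Qed.

Definition Rw n k (f : coloring n k) (a : 'I_n * 'I_n) : {set 'I_k} :=
  [set f (a.1, j) | j in [set~ a.2]].
Definition Cl n k (f : coloring n k) (a : 'I_n * 'I_n) : {set 'I_k} :=
  [set f (i, a.2) | i in [set~ a.1]].

Lemma conflict_in n k (f : coloring n k) a d :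
  conflict a d -> (f d \in Rw f a) || (f d \in Cl f a).
Proof.
case: a d => [a1 a2] [d1 d2]; rewrite /conflict /= => /andP[neq /orP[/eqP e|/eqP e]]; subst.
- apply/orP; left; apply/imsetP; exists d2 => //; rewrite !inE.
  by apply: contraNneq neq => ->.
- apply/orP; right; apply/imsetP; exists d1 => //; rewrite !inE.
  by apply: contraNneq neq => ->.
Qed.

Definition recolor n k (f : coloring n k) a z : coloring n k :=
  [ffun c => if c == a then z else f c].

Lemma recolor_inL n k (f : coloring n k) a z :
  in_L f -> z \notin Rw f a -> z \notin Cl f a -> in_L (recolor f a z).
Proof.
move=> /in_LP H zR zC; apply/in_LP => c d cf; rewrite !ffunE.
have key : forall d, conflict a d -> z != f d.
  move=> e ae; move: (conflict_in f ae) => /orP[] Hm.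
  + by apply: contraNneq zR => ->.
  + by apply: contraNneq zC => ->.
have [ca|_] := eqVneq c a; have [da|_] := eqVneq d a.
- by move: cf; rewrite /conflict ca da eqxx.
- by apply: key; rewrite -ca.
- by rewrite eq_sym; apply: key; rewrite -da conflictC.
- exact: H.
Qed.

Lemma card_ordC n (i : 'I_n) : #|[set~ i]| = n.-1.
Proof. by rewrite cardsC1 card_ord. Qed.

Lemma alt_color n k (f : coloring n k) a y :
  k = (2 * n).-1 -> y \in Rw f a -> y \in Cl f a ->
  exists z, [/\ z != f a, z \notin Rw f a & z \notin Cl f a].
Proof.
move=> Hk yR yC.
have hR : #|Rw f a| <= n.-1 by rewrite -(card_ordC a.2) leq_imset_card.
have hC : #|Cl f a| <= n.-1 by rewrite -(card_ordC a.1) leq_imset_card.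
have hI : 0 < #|Rw f a :&: Cl f a| by apply/card_gt0P; exists y; rewrite inE yR.
have hU := cardsU (Rw f a) (Cl f a).
have hU2 := cardsU (Rw f a :|: Cl f a) [set f a].
rewrite cards1 in hU2.
have hIR : #|Rw f a :&: Cl f a| <= #|Rw f a| by rewrite subset_leq_card // subsetIl.
have n0 : 0 < n by case: a {yR yC hR hC hI hU hU2 hIR} => [[i ?] _]; lia.
have : #|(Rw f a :|: Cl f a) :|: [set f a]| < #|'I_k| by rewrite card_ord; lia.
case/exists_notin => z; rewrite !inE negb_or => /andP[/norP[zR zC] za].
by exists z.
Qed.

Lemma swap_helper n k (f : coloring n k) a b d :
  in_L f -> a.1 == b.1 -> f b \notin Cl f a -> conflict a d -> d != b -> f d != f b.
Proof.
move=> /in_LP H ab yC ad db.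
move: (ad); rewrite /conflict => /andP[ad' /orP[e|e]].
- apply: H; rewrite /conflict; apply/andP; split=> //.
  by rewrite -(eqP e) ab.
- have : f d \in Cl f a.
    apply/imsetP; exists d.1; last by rewrite (eqP e); case: (d).
    rewrite !inE; apply: contraNneq ad' => e1.
    by apply/eqP; case: a d e e1 {ad yC db ab} => [? ?] [? ?] /= /eqP -> ->.
  by apply: contraTneq => ->.
Qed.

Definition swapc n k (f : coloring n k) a b : coloring n k :=
  [ffun c => if c == a then f b else if c == b then f a else f c].

Lemma swap_inL n k (f : coloring n k) a b :
  in_L f -> a != b -> a.1 == b.1 -> f b \notin Cl f a -> f a \notin Cl f b ->
  in_L (swapc f a b).
Proof.
move=> Hf neq e yC xC; have /in_LP H := Hf.
have hab : conflict a b by rewrite /conflict neq e.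
have ha := @swap_helper _ _ f a b _ Hf e yC.
have hb := @swap_helper _ _ f b a _ Hf (etrans (eq_sym _ _) e) xC.
apply/in_LP => c d cd; rewrite !ffunE.
have nba : b != a by rewrite eq_sym.
have [ca|ca] := eqVneq c a; have [da|da] := eqVneq d a.
- by move: cd; rewrite ca da /conflict eqxx.
- subst c; have [db|db] := eqVneq d b.
  + by subst d; rewrite eq_sym; apply: H.
  + by rewrite eq_sym; apply: ha.
- subst d; have [cb|cb] := eqVneq c b.
  + by subst c; apply: H; rewrite conflictC.
  + by apply: ha; rewrite // conflictC.
- have [cb|cb] := eqVneq c b; have [db|db] := eqVneq d b.
  + by move: cd; rewrite cb db /conflict eqxx.
  + by subst c; rewrite eq_sym; apply: hb.
  + by subst d; apply: hb; rewrite // conflictC.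
  + exact: H.
Qed.

Lemma extends_mod n k (P : pcoloring n k) (f g : coloring n k) :
  extends_to P f -> (forall c, c \notin uncolored P -> g c = f c) -> extends_to P g.
Proof.
move=> /forallP Ef H; apply/forallP => c; move: (Ef c).
by case e: (P c) => [v|] //; rewrite H // inE e.
Qed.

Lemma alt_case n (P : pcoloring n (2 * n - 1)) f a y :
  in_L f -> extends_to P f -> a \in uncolored P -> y \in Rw f a -> y \in Cl f a ->
  exists g, [/\ in_L g, extends_to P g & g != f].
Proof.
move=> Lf Ef aU yR yC.
have [z [za zR zC]] := alt_color (subn1 _) yR yC.
exists (recolor f a z); split.
- exact: recolor_inL.
- apply: (extends_mod Ef) => c cU; rewrite ffunE.
  by case: eqP => // ca; move: cU; rewrite ca aU.
- apply/eqP => /(congr1 (fun g : coloring _ _ => g a)); rewrite ffunE eqxx.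
  by move/eqP; rewrite (negbTE za).
Qed.

Lemma in_Rw n k (f : coloring n k) a b : a != b -> a.1 == b.1 -> f b \in Rw f a.
Proof.
case: a b => [a1 a2] [b1 b2] /= ab /eqP e; subst b1.
apply/imsetP; exists b2 => //; rewrite !inE; apply: contraNneq ab => ->; done.
Qed.

Lemma partC n (P : pcoloring n (2 * n - 1)) :
  n < #|uncolored P| -> ~~ uniquely_extends P.
Proof.
move=> Hu; apply/negP => /cards1P [f Hs].
have : f \in [set g | in_L g && extends_to P g] by rewrite Hs set11.
rewrite inE => /andP[Lf Ef].
have other : forall g, in_L g -> extends_to P g -> g != f -> False.
  move=> g Lg Eg; have : g \in [set g | in_L g && extends_to P g] by rewrite inE Lg Eg.
  by rewrite Hs inE => ->.
have : ~~ [forall a in uncolored P, forall b in uncolored P, (a.1 == b.1) ==> (a == b)].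
  apply/negP => /forall_inP H.
  have inj : {in uncolored P &, injective (fun c : 'I_n * 'I_n => c.1)}.
    by move=> a b aU bU e; apply/eqP; move: (H a aU) => /forall_inP/(_ b bU)/implyP; apply; rewrite e.
  have := card_in_imset inj; have := max_card [set c.1 | c in uncolored P].
  move=> h2 h1; rewrite card_ord in h2; rewrite h1 in h2; lia.
move=> /forall_inPn [a aU /forall_inPn [b bU]]; rewrite negb_imply => /andP[e ab].
case yC : (f b \in Cl f a).
  by have [g [Lg Eg gf]] := alt_case Lf Ef aU (in_Rw f ab e) yC; apply: (other g).
case xC : (f a \in Cl f b).
  have ba : b != a by rewrite eq_sym.
  have eb : b.1 == a.1 by rewrite eq_sym.
  by have [g [Lg Eg gf]] := alt_case Lf Ef bU (in_Rw f ba eb) xC; apply: (other g).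
apply: (other (swapc f a b)).
- by apply: swap_inL; rewrite ?yC ?xC.
- apply: (extends_mod Ef) => c cU; rewrite ffunE.
  case: eqP => [ca|_]; first by move: cU; rewrite ca aU.
  by case: eqP => [cb|_] //; move: cU; rewrite cb bU.
- apply/eqP => /(congr1 (fun g : coloring _ _ => g a)); rewrite ffunE eqxx => /eqP.
  apply/negP; have /in_LP H := Lf; rewrite eq_sym; apply: H; by rewrite /conflict ab e.
Qed.
Definition T (n i j : nat) : nat :=
  if i == n.-1 then (2 * j) %% n.-1
  else if j == n.-1 then (2 * i) %% n.-1 else (i + j) %% n.-1.

Lemma Tsym n i j : T n i j = T n j i.
Proof.
rewrite /T; have [hi|hi] := eqVneq i n.-1; have [hj|hj] := eqVneq j n.-1 => //.
- by rewrite hi hj.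
- by rewrite addnC.
Qed.

Lemma Tlt n i j : 1 < n -> T n i j < n.-1.
Proof. move=> H; rewrite /T; case: ifP => _; [|case: ifP => _]; apply: ltn_pmod; lia. Qed.

Lemma double_inj m a b : odd m -> a < m -> b < m -> (2 * a) %% m = (2 * b) %% m -> a = b.
Proof.
move=> om.
wlog ab : a b / a <= b.
  move=> W ha hb E; case: (leqP a b) => h; first exact: W.
  by symmetry; apply: W => //; lia.
move=> ha hb E.
have : (2 * b == 2 * a %[mod m]) by rewrite E.
rewrite eqn_mod_dvd; last by lia.
rewrite -mulnBr Gauss_dvdr; last by rewrite coprimen2.
move=> d; case: (posnP (b - a)) => h; first by lia.
by have := dvdn_leq h d; lia.
Qed.

Lemma Tinj n i j1 j2 : 1 < n -> ~~ odd n -> i < n -> j1 < n -> j2 < n -> j1 != i -> j2 != i ->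
  T n i j1 = T n i j2 -> j1 = j2.
Proof.
move=> n1 ev hi h1 h2 n1i n2i.
have om : odd n.-1 by move: n1 ev; case: n {hi h1 h2 n1i n2i} => // n' _ /=; rewrite negbK.
have m0 : 0 < n.-1 by lia.
rewrite /T; case: eqP => [im|im].
  by apply: double_inj => //; lia.
case: eqP => [e1|e1]; case: eqP => [e2|e2].
- by rewrite e1 e2.
- move/eqP; rewrite mul2n -addnn eqn_modDl => /eqP; rewrite !modn_small; lia.
- move/eqP; rewrite mul2n -addnn eqn_modDl => /eqP; rewrite !modn_small; lia.
- move/eqP; rewrite eqn_modDl => /eqP; rewrite !modn_small; lia.
Qed.

Lemma Tsurj n i c : 1 < n -> ~~ odd n -> i < n -> c < n.-1 ->
  exists j, [/\ j < n, j != i & T n i j = c].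
Proof.
move=> n1 ev hi hc.
pose i0 : 'I_n := Ordinal hi.
pose g := fun j : 'I_n.-1 => Ordinal (Tlt i (lift i0 j) n1).
have ginj : injective g.
  move=> j1 j2 /(congr1 val) /= E; apply: (@lift_inj _ i0); apply: val_inj.
  apply: (Tinj n1 ev hi) => //; try exact: ltn_ord.
  - by have := neq_lift i0 j1; rewrite eq_sym -val_eqE.
  - by have := neq_lift i0 j2; rewrite eq_sym -val_eqE.
case: (injF_bij ginj) => h _ hK.
exists (lift i0 (h (Ordinal hc))); split => //.
- by have := neq_lift i0 (h (Ordinal hc)); rewrite eq_sym -val_eqE.
- by have := congr1 val (hK (Ordinal hc)).
Qed.

Definition Fv (n i j : nat) : nat :=
  if i < j then (T n i j).+1 else if j < i then T n i j + n else 0.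

Lemma Flt n i j : 1 < n -> Fv n i j < 2 * n - 1.
Proof. move=> n1; have := Tlt i j n1; rewrite /Fv; case: (ltngtP i j) => _; lia. Qed.

Lemma Frow n i j1 j2 : 1 < n -> ~~ odd n -> i < n -> j1 < n -> j2 < n ->
  Fv n i j1 = Fv n i j2 -> j1 = j2.
Proof.
move=> n1 ev hi h1 h2; rewrite /Fv.
have t1 := Tlt i j1 n1; have t2 := Tlt i j2 n1.
case: (ltngtP i j1) => c1; case: (ltngtP i j2) => c2 E; try lia;
  apply: (Tinj n1 ev hi) => //; lia.
Qed.

Lemma Fcol n i1 i2 j : 1 < n -> ~~ odd n -> i1 < n -> i2 < n -> j < n ->
  Fv n i1 j = Fv n i2 j -> i1 = i2.
Proof.
move=> n1 ev h1 h2 hj; rewrite /Fv (Tsym n i1 j) (Tsym n i2 j).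
have t1 := Tlt j i1 n1; have t2 := Tlt j i2 n1.
case: (ltngtP i1 j) => c1; case: (ltngtP i2 j) => c2 E; try lia;
  apply: (Tinj n1 ev hj) => //; lia.
Qed.

Lemma Fdiag n i v : 1 < n -> ~~ odd n -> i < n -> 0 < v < 2 * n - 1 ->
  exists j, [/\ j < n, j != i & (Fv n i j = v \/ Fv n j i = v)].
Proof.
move=> n1 ev hi hv.
case: (leqP v n.-1) => hvm.
- have [j [hj ji tj]] := Tsurj (c:=v.-1) n1 ev hi (ltac:(lia) : v.-1 < n.-1).
  exists j; split => //; rewrite /Fv (Tsym n j i) tj.
  case: (ltngtP i j) => c; [left|right|]; lia.
- have [j [hj ji tj]] := Tsurj (c:=v - n) n1 ev hi (ltac:(lia) : v - n < n.-1).
  exists j; split => //; rewrite /Fv (Tsym n j i) tj.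
  case: (ltngtP i j) => c; [right|left|]; lia.
Qed.

Definition Fo n (H : 1 < n) (i j : 'I_n) : 'I_(2 * n - 1) := Ordinal (Flt i j H).
Definition Ff n (H : 1 < n) : coloring n (2 * n - 1) := [ffun c => Fo H c.1 c.2].
Definition P0 n (H : 1 < n) : pcoloring n (2 * n - 1) :=
  [ffun c => if c.1 == c.2 then None else Some (Ff H c)].

Lemma Ff_inL n (H : 1 < n) : ~~ odd n -> in_L (Ff H).
Proof.
move=> ev; apply/in_LP => [[c1 c2] [d1 d2]]; rewrite /conflict /= => /andP[neq /orP[/eqP e|/eqP e]];
  subst; apply: contraNneq neq; rewrite !ffunE /= => /(congr1 val) /= E.
- by have := Frow H ev (ltn_ord d1) (ltn_ord c2) (ltn_ord d2) E => /val_inj ->.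
- by have := Fcol H ev (ltn_ord c1) (ltn_ord d1) (ltn_ord d2) E => /val_inj ->.
Qed.

Lemma P0_unique n (H : 1 < n) : ~~ odd n -> uniquely_extends (P0 H).
Proof.
move=> ev; apply/cards1P; exists (Ff H); apply/setP => g; rewrite !inE.
apply/andP/eqP.
- case=> Lg /forallP Eg; apply/ffunP => [[i j]].
  have offd : forall d : 'I_n * 'I_n, d.1 != d.2 -> g d = Ff H d.
    by move=> d dn; move: (Eg d); rewrite ffunE (negbTE dn) => /eqP.
  have [ij|ij] := eqVneq i j; last by apply: offd.
  subst j; apply: val_inj; rewrite ffunE /= /Fv ltnn.
  case: (posnP (g (i, i))) => // hv.
  have hv2 : 0 < g (i, i) < 2 * n - 1 by rewrite hv ltn_ord.
  have [j [hj ji hF]] := Fdiag H ev (ltn_ord i) hv2.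
  pose j0 : 'I_n := Ordinal hj.
  have ji0 : i != j0 by rewrite -val_eqE /= eq_sym.
  have /in_LP L := Lg.
  case: hF => hF.
  + have := L (i, i) (i, j0); rewrite /conflict /= eqxx xpair_eqE eqxx ji0 /= => /(_ isT).
    by move=> /negP []; rewrite (offd (i, j0)) // ffunE -val_eqE /= hF.
  + have := L (i, i) (j0, i); rewrite /conflict /= xpair_eqE (negbTE ji0) eqxx orbT /= => /(_ isT).
    by move=> /negP []; rewrite (offd (j0, i)) 1?eq_sym // ffunE -val_eqE /= hF.
- move=> ->; split; first exact: Ff_inL.
  by apply/forallP => c; rewrite ffunE; case: ifP.
Qed.

Theorem mainTheorem4 (n : nat) (Hn : 0 < n) (Heven : ~~ odd n) :
  is_defining_number n (2 * n - 1) (n ^ 2 - n) /\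
  (exists P : pcoloring n (2 * n - 1),
     colored P = [set c : 'I_n * 'I_n | c.1 != c.2] /\ uniquely_extends P) /\
  (forall P : pcoloring n (2 * n - 1),
     n < #|uncolored P| -> ~~ uniquely_extends P).
Proof.
have n1 : 1 < n by case: n Hn Heven => [|[|]].
have colP0 : colored (P0 n1) = [set c : 'I_n * 'I_n | c.1 != c.2].
  by apply/setP => c; rewrite !inE ffunE; case: ifP.
have cardT : #|[set: 'I_n * 'I_n]| = n * n by rewrite cardsT card_prod card_ord.
split; last split; last exact: partC.
- split.
  + exists (colored (P0 n1)); split; first by exists (P0 n1); split => //; exact: P0_unique.
    rewrite colP0.
    have -> : [set c : 'I_n * 'I_n | c.1 != c.2] = ~: [set (i, i) | i in 'I_n].
      apply/setP => [[i j]]; rewrite !inE /=; apply/idP/idP.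
      * move=> ij; apply/imsetP => [[k _ [e1 e2]]]; subst; by rewrite eqxx in ij.
      * by apply: contraNN => /eqP ->; apply/imsetP; exists j.
    have := cardsC [set (i, i) | i in 'I_n].
    rewrite card_in_imset; last by move=> a b _ _ [].
    rewrite card_ord card_prod card_ord -mulnn; by move=> <-; rewrite addKn.
  + move=> S [P [UP <-]].
    have hu : #|uncolored P| <= n by rewrite leqNgt; apply: contraL UP => /partC.
    have -> : colored P = ~: uncolored P by apply/setP => c; rewrite !inE.
    have := cardsC (uncolored P); rewrite card_prod card_ord -mulnn; lia.
- by exists (P0 n1); split => //; exact: P0_unique.
Qed.
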